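(* Let $\alpha$ be a unit-speed curve in $\mathbb{R}^3$ with arc length $s$, nonvanishing curvature $\kappa$ and torsion $\tau$. Let $\alpha_T$ be its tangent indicatrix, with arc length $s_T=\int\kappa\,ds$, and let $\beta$ be a Mannheim-direction curve of $\alpha_T$ (an $X$-direction curve of $\alpha_T$ with $N_\beta=B_T$). Then there is a function $\psi(s)$ with $\frac{d\psi}{ds}=\sqrt{\kappa^2+\tau^2}$ such that, at corresponding parameter values, $$\frac{\tau_\beta}{\kappa_\beta}=\tan\psi.$$ Moreover, $$\frac{\kappa_\beta^2}{(\kappa_\beta^2+\tau_\beta^2)^{3/2}}\,\frac{d}{ds_T}\Big(\frac{\tau_\beta}{\kappa_\beta}\Big)=\mp\,\frac{1}{\dfrac{\kappa^2}{(\kappa^2+\tau^2)^{3/2}}\Big(\dfrac{\tau}{\kappa}\Big)'},$$ that is, the two sides agree up to sign. Here $'=d/ds$.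
   Context: Let $\alpha:I\subset\mathbb{R}\to\mathbb{R}^3$ be a unit-speed curve with arc length $s$, curvature $\kappa>0$, torsion $\tau$ and Frenet frame $\{T,N,B\}$. Put $f=\tau/\kappa$ and $\sigma=\frac{\kappa^2}{(\kappa^2+\tau^2)^{3/2}}(\tau/\kappa)'$. The tangent indicatrix of $\alpha$ is the curve $\alpha_T=T$ on the unit sphere. Its arc length is $s_T=\int\kappa\,ds$, so parameters $s$ and $s_T(s)$ correspond. Its Frenet apparatus is $\{T_T,N_T,B_T,\kappa_T,\tau_T\}$, with $\frac{dT_T}{ds_T}=\kappa_TN_T$, $\frac{dN_T}{ds_T}=-\kappa_TT_T+\tau_TB_T$ and $\frac{dB_T}{ds_T}=-\tau_TN_T$. It is known that $\kappa_T=\sqrt{1+f^2}$ and $\tau_T=\sigma\sqrt{1+f^2}$. Let $x,y,z$ be real functions of $s_T$ with $x^2+y^2+z^2=1$, and set $X=xT_T+yN_T+zB_T$. An integral curve $\beta$ of $X$, meaning $d\beta/ds_T=X$, is an $X$-direction curve of $\alpha_T$. It is regarded as a unit-speed Frenet curve with frame $\{T_\beta=X,N_\beta,B_\beta\}$, curvature $\kappa_\beta>0$ and torsion $\tau_\beta$. $\beta$ is a Mannheim-direction curve of $\alpha_T$ if $N_\beta=B_T$. *)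

(* Defs.v *)
From Stdlib Require Import Reals.
From Coquelicot Require Import Coquelicot.
Open Scope R_scope.

Record vec := mkV { v1 : R ; v2 : R ; v3 : R }.

Definition vadd (a b : vec) : vec := mkV (v1 a + v1 b) (v2 a + v2 b) (v3 a + v3 b).
Definition vscal (k : R) (a : vec) : vec := mkV (k * v1 a) (k * v2 a) (k * v3 a).
Definition dot (a b : vec) : R := v1 a * v1 b + v2 a * v2 b + v3 a * v3 b.
Definition cross (a b : vec) : vec :=
  mkV (v2 a * v3 b - v3 a * v2 b) (v3 a * v1 b - v1 a * v3 b) (v1 a * v2 b - v2 a * v1 b).

Definition is_derive_v (F : R -> vec) (t : R) (V : vec) : Prop :=
  is_derive (fun u => v1 (F u)) t (v1 V) /\
  is_derive (fun u => v2 (F u)) t (v2 V) /\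
  is_derive (fun u => v3 (F u)) t (v3 V).

Definition is_open_interval (I : R -> Prop) : Prop :=
  (exists x, I x) /\
  (forall x y z, I x -> I z -> x <= y <= z -> I y) /\
  (forall x, I x -> exists e, 0 < e /\ forall y, Rabs (y - x) < e -> I y).

Definition pos_orthonormal (T N B : vec) : Prop :=
  dot T T = 1 /\ dot N N = 1 /\ dot B B = 1 /\
  dot T N = 0 /\ dot T B = 0 /\ dot N B = 0 /\ B = cross T N.

Definition frenet (D : R -> Prop) (c T N B : R -> vec) (k t : R -> R) : Prop :=
  forall s, D s ->
    is_derive_v c s (T s) /\
    is_derive_v T s (vscal (k s) (N s)) /\
    is_derive_v N s (vadd (vscal (- k s) (T s)) (vscal (t s) (B s))) /\
    is_derive_v B s (vscal (- t s) (N s)) /\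
    0 < k s /\
    pos_orthonormal (T s) (N s) (B s).

Definition pow32 (x : R) : R := sqrt x ^ 3.

(* Main.v *)
Require Import Defs.
From Stdlib Require Import Reals Lra.
From Coquelicot Require Import Coquelicot.
Open Scope R_scope.

Lemma vec_eq a b : v1 a = v1 b -> v2 a = v2 b -> v3 a = v3 b -> a = b.
Proof. destruct a, b; simpl; intros; subst; reflexivity. Qed.

Lemma dot_addl a b c : dot (vadd a b) c = dot a c + dot b c.
Proof. unfold dot; simpl; ring. Qed.
Lemma dot_addr a b c : dot c (vadd a b) = dot c a + dot c b.
Proof. unfold dot; simpl; ring. Qed.
Lemma dot_scall k a c : dot (vscal k a) c = k * dot a c.
Proof. unfold dot; simpl; ring. Qed.
Lemma dot_scalr k a c : dot c (vscal k a) = k * dot c a.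
Proof. unfold dot; simpl; ring. Qed.
Lemma dot_comm a b : dot a b = dot b a.
Proof. unfold dot; ring. Qed.
Lemma triple a b c : dot (cross a b) c = dot a (cross b c).
Proof. unfold dot, cross; simpl; ring. Qed.
Lemma triple2 a b c : dot (cross a b) c = dot b (cross c a).
Proof. unfold dot, cross; simpl; ring. Qed.
Lemma cross_anti a b : cross a b = vscal (-1) (cross b a).
Proof. apply vec_eq; unfold cross; simpl; ring. Qed.
Lemma cross_NB T N B : pos_orthonormal T N B -> cross N B = T.
Proof.
  intros (_&HNN&_&HTN&_&_&HB). subst B.
  assert (E: cross N (cross T N) = vadd (vscal (dot N N) T) (vscal (- dot T N) N)).
  { apply vec_eq; unfold cross, dot; simpl; ring. }
  rewrite E, HNN, HTN. apply vec_eq; simpl; ring.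
Qed.
Lemma cross_BN T N B : pos_orthonormal T N B -> cross B N = vscal (-1) T.
Proof. intros H. rewrite cross_anti, (cross_NB _ _ _ H). reflexivity. Qed.

Lemma is_derive_eq (f : R -> R) x l l' : is_derive f x l -> l = l' -> is_derive f x l'.
Proof. intros H <-; exact H. Qed.

Lemma dot_derive F G t F' G' : is_derive_v F t F' -> is_derive_v G t G' ->
  is_derive (fun u => dot (F u) (G u)) t (dot F' (G t) + dot (F t) G').
Proof.
  intros (A1&A2&A3) (B1&B2&B3).
  pose proof (is_derive_mult _ _ _ _ _ A1 B1 Rmult_comm) as P1.
  pose proof (is_derive_mult _ _ _ _ _ A2 B2 Rmult_comm) as P2.
  pose proof (is_derive_mult _ _ _ _ _ A3 B3 Rmult_comm) as P3.
  pose proof (is_derive_plus _ _ _ _ _ (is_derive_plus _ _ _ _ _ P1 P2) P3) as P.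
  eapply is_derive_eq; [exact P|]. unfold plus, mult, dot; simpl. ring.
Qed.

Lemma open_loc (I : R -> Prop) s : is_open_interval I -> I s -> locally s I.
Proof.
  intros [_ [_ H]] Hs. destruct (H s Hs) as [e [He Hy]].
  exists (mkposreal e He). intros y By. apply Hy. exact By.
Qed.

Lemma derv_ext_loc F G s V : locally s (fun r => F r = G r) -> is_derive_v F s V -> is_derive_v G s V.
Proof.
  intros L (A1&A2&A3); split; [|split].
  - eapply is_derive_ext_loc; [|exact A1]. eapply filter_imp; [|exact L]. intros r E; simpl; now rewrite E.
  - eapply is_derive_ext_loc; [|exact A2]. eapply filter_imp; [|exact L]. intros r E; simpl; now rewrite E.
  - eapply is_derive_ext_loc; [|exact A3]. eapply filter_imp; [|exact L]. intros r E; simpl; now rewrite E.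
Qed.

Lemma derv_unique F s V W : is_derive_v F s V -> is_derive_v F s W -> V = W.
Proof.
  intros (A1&A2&A3) (B1&B2&B3). apply vec_eq.
  - apply is_derive_unique in A1; apply is_derive_unique in B1; congruence.
  - apply is_derive_unique in A2; apply is_derive_unique in B2; congruence.
  - apply is_derive_unique in A3; apply is_derive_unique in B3; congruence.
Qed.

Lemma derv_comp F g s V dg : is_derive_v F (g s) V -> is_derive g s dg ->
  is_derive_v (fun r => F (g r)) s (vscal dg V).
Proof.
  intros (A1&A2&A3) Hg; split; [|split]; simpl.
  - exact (is_derive_comp _ _ _ _ _ A1 Hg).
  - exact (is_derive_comp _ _ _ _ _ A2 Hg).
  - exact (is_derive_comp _ _ _ _ _ A3 Hg).
Qed.

Lemma deriv_unique_r (f : R -> R) s a b : is_derive f s a -> is_derive f s b -> a = b.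
Proof. intros A B; apply is_derive_unique in A; apply is_derive_unique in B; congruence. Qed.

Lemma deriv_zero_loc (f : R -> R) s : locally s (fun r => f r = 0) -> is_derive f s 0.
Proof.
  intros L. eapply is_derive_ext_loc; [|apply (is_derive_const 0)].
  eapply filter_imp; [|exact L]. intros r E; simpl; now rewrite E.
Qed.

Definition Xc (x y z : R) (T N B : vec) := vadd (vadd (vscal x T) (vscal y N)) (vscal z B).

Lemma Xc_T x y z T N B : pos_orthonormal T N B -> dot (Xc x y z T N B) T = x.
Proof. intros (h1&h2&h3&h4&h5&h6&_). unfold Xc. rewrite !dot_addl, !dot_scall.
  rewrite (dot_comm N T), (dot_comm B T). rewrite h1,h4,h5. ring. Qed.
Lemma Xc_N x y z T N B : pos_orthonormal T N B -> dot (Xc x y z T N B) N = y.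
Proof. intros (h1&h2&h3&h4&h5&h6&_). unfold Xc. rewrite !dot_addl, !dot_scall.
  rewrite (dot_comm B N). rewrite h2,h4,h6. ring. Qed.
Lemma Xc_B x y z T N B : pos_orthonormal T N B -> dot (Xc x y z T N B) B = z.
Proof. intros (h1&h2&h3&h4&h5&h6&_). unfold Xc. rewrite !dot_addl, !dot_scall.
  rewrite h3,h5,h6. ring. Qed.

Lemma beta_facts (J : R -> Prop) (TT NT BT : R -> vec) (kappaT tauT : R -> R) alphaT
  (x y z : R -> R) (beta Nb Bb : R -> vec) (kappab taub : R -> R) :
  is_open_interval J ->
  frenet J alphaT TT NT BT kappaT tauT ->
  frenet J beta (fun u => vadd (vadd (vscal (x u) (TT u)) (vscal (y u) (NT u))) (vscal (z u) (BT u)))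
    Nb Bb kappab taub ->
  (forall u, J u -> Nb u = BT u) ->
  forall u, J u ->
    z u = 0 /\ is_derive x u (kappaT u * y u) /\ is_derive y u (- kappaT u * x u) /\
    kappab u = tauT u * y u /\ taub u = tauT u * x u.
Proof.
  intros HJ FT Fb HM u Hu.
  change (fun u => vadd (vadd (vscal (x u) (TT u)) (vscal (y u) (NT u))) (vscal (z u) (BT u)))
    with (fun u => Xc (x u) (y u) (z u) (TT u) (NT u) (BT u)) in Fb.
  set (X := fun u => Xc (x u) (y u) (z u) (TT u) (NT u) (BT u)) in Fb.
  pose proof (open_loc _ _ HJ Hu) as LJ.
  destruct (FT u Hu) as (dA & dT & dN & dB & kp & PO).
  destruct (Fb u Hu) as (dbeta & dX & dNb & dBb & kbp & POb).
  assert (Ex : forall v, J v -> x v = dot (X v) (TT v)).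
  { intros v Hv. unfold X. rewrite Xc_T; auto. apply (FT v Hv). }
  assert (Ey : forall v, J v -> y v = dot (X v) (NT v)).
  { intros v Hv. unfold X. rewrite Xc_N; auto. apply (FT v Hv). }
  assert (Ez : forall v, J v -> z v = 0).
  { intros v Hv. destruct (Fb v Hv) as (_&_&_&_&_&(_&_&_&h&_)). rewrite HM in h by auto.
    unfold X in h. rewrite Xc_B in h; auto. apply (FT v Hv). }
  pose proof (HM u Hu) as HMu.
  destruct PO as (o1&o2&o3&o4&o5&o6&o7).
  split; [now apply Ez|].
  split.
  { eapply is_derive_ext_loc.
    - eapply filter_imp; [|exact LJ]. intros v Hv; simpl. symmetry; apply Ex; auto.
    - eapply is_derive_eq. apply (dot_derive _ _ _ _ _ dX dT).
      rewrite dot_scall, dot_scalr, HMu, (dot_comm (BT u)), o5. rewrite <- Ey by auto. lra. }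
  split.
  { eapply is_derive_ext_loc.
    - eapply filter_imp; [|exact LJ]. intros v Hv; simpl. symmetry; apply Ey; auto.
    - eapply is_derive_eq. apply (dot_derive _ _ _ _ _ dX dN).
      rewrite dot_scall, dot_addr, !dot_scalr, HMu, (dot_comm (BT u)), o6, <- Ex; auto.
      unfold X. rewrite Xc_B by (repeat split; auto). rewrite Ez by auto. lra. }
  split.
  { pose proof (dot_derive _ _ _ _ _ dX dB) as P.
    assert (P0 : is_derive (fun v => dot (X v) (BT v)) u 0).
    { apply deriv_zero_loc. eapply filter_imp; [|exact LJ]. intros v Hv.
      unfold X. rewrite Xc_B. apply Ez; auto. apply (FT v Hv). }
    pose proof (deriv_unique_r _ _ _ _ P P0) as E.
    rewrite dot_scall, dot_scalr, HMu, o3, <- Ey in E; auto. lra. }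
  { pose proof (dot_derive _ _ _ _ _ dBb dB) as P.
    assert (P0 : is_derive (fun v => dot (Bb v) (BT v)) u 0).
    { apply deriv_zero_loc. eapply filter_imp; [|exact LJ]. intros v Hv.
      destruct (Fb v Hv) as (_&_&_&_&_&(_&_&_&_&_&h&_)). rewrite HM in h by auto.
      rewrite dot_comm; exact h. }
    pose proof (deriv_unique_r _ _ _ _ P P0) as E.
    destruct POb as (_&_&_&_&_&_&hB).
    rewrite dot_scall, dot_scalr, HMu, o3 in E.
    rewrite hB, HMu, triple, (cross_BN _ _ _ (conj o1 (conj o2 (conj o3 (conj o4 (conj o5 (conj o6 o7))))))) in E.
    rewrite dot_scalr, <- Ex in E; auto. lra. }
Qed.
Lemma xy_lem a b k : b <> 0 -> a^2 + b^2 = 1 -> ((k*b*b - a*(-k*a))/b^2) * /(1 + (a/b)*(a/b)) = k.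
Proof. intros Hb H.
 replace (1 + a/b*(a/b)) with ((a^2+b^2)/b^2) by (field; auto).
 replace (k*b*b - a*(-k*a)) with (k*(a^2+b^2)) by ring. rewrite H. field. auto. Qed.

Theorem corollary6p6
  (I J : R -> Prop)
  (alpha T N B : R -> vec) (kappa tau : R -> R)
  (sT : R -> R)
  (alphaT TT NT BT : R -> vec) (kappaT tauT : R -> R)
  (x y z : R -> R)
  (beta Nb Bb : R -> vec) (kappab taub : R -> R) :
  is_open_interval I -> is_open_interval J ->
  frenet I alpha T N B kappa tau ->
  (forall s, I s -> ex_derive kappa s /\ ex_derive tau s) ->
  (forall s, I s -> J (sT s) /\ is_derive sT s (kappa s)) ->
  (forall u, J u -> exists s, I s /\ sT s = u) ->
  (forall s, I s -> alphaT (sT s) = T s) ->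
  frenet J alphaT TT NT BT kappaT tauT ->
  (forall u, J u -> x u ^ 2 + y u ^ 2 + z u ^ 2 = 1) ->
  frenet J beta
    (fun u => vadd (vadd (vscal (x u) (TT u)) (vscal (y u) (NT u))) (vscal (z u) (BT u)))
    Nb Bb kappab taub ->
  (forall u, J u -> Nb u = BT u) ->
  (exists psi : R -> R, forall s, I s ->
      is_derive psi s (sqrt (kappa s ^ 2 + tau s ^ 2)) /\
      taub (sT s) / kappab (sT s) = tan (psi s)) /\
  (forall s, I s ->
     let sigma := kappa s ^ 2 / pow32 (kappa s ^ 2 + tau s ^ 2)
                  * Derive (fun r => tau r / kappa r) s in
     exists D, is_derive (fun u => taub u / kappab u) (sT s) D /\
       (kappab (sT s) ^ 2 / pow32 (kappab (sT s) ^ 2 + taub (sT s) ^ 2) * D = 1 / sigma \/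
        kappab (sT s) ^ 2 / pow32 (kappab (sT s) ^ 2 + taub (sT s) ^ 2) * D = - (1 / sigma))).
Proof.
  intros HI HJ Fa Hkt HsT HsTon Hind FT Hxyz Fb HM.
  pose proof (beta_facts J TT NT BT kappaT tauT alphaT x y z beta Nb Bb kappab taub HJ FT Fb HM) as BF.
  assert (B1 : forall s, I s -> TT (sT s) = N s).
  { intros s Hs. destruct (HsT s Hs) as [Ju dsT].
    destruct (FT _ Ju) as (dA&_).
    pose proof (derv_comp _ _ _ _ _ dA dsT) as P.
    assert (P' : is_derive_v T s (vscal (kappa s) (TT (sT s)))).
    { eapply derv_ext_loc; [|exact P]. eapply filter_imp; [|exact (open_loc _ _ HI Hs)].
      intros r Hr; simpl. apply Hind; auto. }
    destruct (Fa s Hs) as (_&dT&_&_&kp&_).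
    pose proof (derv_unique _ _ _ _ P' dT) as E.
    apply vec_eq; [apply (f_equal v1) in E | apply (f_equal v2) in E | apply (f_equal v3) in E];
      simpl in E; (eapply Rmult_eq_reg_l; [exact E|lra]). }
  assert (B2 : forall s, I s -> vscal (kappa s * kappaT (sT s)) (NT (sT s)) =
                 vadd (vscal (- kappa s) (T s)) (vscal (tau s) (B s))).
  { intros s Hs. destruct (HsT s Hs) as [Ju dsT].
    destruct (FT _ Ju) as (_&dTT&_).
    pose proof (derv_comp _ _ _ _ _ dTT dsT) as P.
    assert (P' : is_derive_v N s (vscal (kappa s) (vscal (kappaT (sT s)) (NT (sT s))))).
    { eapply derv_ext_loc; [|exact P]. eapply filter_imp; [|exact (open_loc _ _ HI Hs)].
      intros r Hr; simpl. apply B1; auto. }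
    destruct (Fa s Hs) as (_&_&dN&_).
    pose proof (derv_unique _ _ _ _ P' dN) as E.
    rewrite <- E. apply vec_eq; simpl; ring. }
  assert (B3 : forall s, I s -> kappa s * kappaT (sT s) = sqrt (kappa s ^ 2 + tau s ^ 2)).
  { intros s Hs. destruct (HsT s Hs) as [Ju dsT].
    destruct (FT _ Ju) as (_&_&_&_&kTp&(_&n2&_)).
    destruct (Fa s Hs) as (_&_&_&_&kp&(o1&o2&o3&o4&o5&o6&_)).
    pose proof (f_equal (fun v => dot v v) (B2 s Hs)) as E. simpl in E.
    rewrite !dot_addl, !dot_addr, !dot_scall, !dot_scalr, (dot_comm (B s) (T s)) in E.
    rewrite n2, o1, o3, o5 in E.
    assert (E2 : kappa s ^ 2 + tau s ^ 2 = (kappa s * kappaT (sT s))^2) by nra.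
    rewrite E2.
    rewrite sqrt_pow2; auto. apply Rlt_le, Rmult_lt_0_compat; auto. }
  assert (B5 : forall s, I s -> sqrt (kappa s ^ 2 + tau s ^ 2) * dot (NT (sT s)) (T s) = - kappa s).
  { intros s Hs. destruct (Fa s Hs) as (_&_&_&_&kp&(o1&o2&o3&o4&o5&o6&_)).
    pose proof (f_equal (fun v => dot v (T s)) (B2 s Hs)) as E. simpl in E.
    rewrite !dot_addl, !dot_scall, (dot_comm (B s) (T s)), o1, o5, B3 in E; auto. lra. }
  assert (B6 : forall s, I s -> sqrt (kappa s ^ 2 + tau s ^ 2) * dot (NT (sT s)) (B s) = tau s).
  { intros s Hs. destruct (Fa s Hs) as (_&_&_&_&kp&(o1&o2&o3&o4&o5&o6&_)).
    pose proof (f_equal (fun v => dot v (B s)) (B2 s Hs)) as E. simpl in E.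
    rewrite !dot_addl, !dot_scall, o3, o5, B3 in E; auto. lra. }
  assert (B7 : forall s, I s -> dot (BT (sT s)) (T s) = dot (NT (sT s)) (B s)).
  { intros s Hs. destruct (HsT s Hs) as [Ju dsT].
    destruct (FT _ Ju) as (_&_&_&_&_&(_&_&_&_&_&_&q7)).
    destruct (Fa s Hs) as (_&_&_&_&_&(_&_&_&_&_&_&o7)).
    rewrite q7, B1, triple2, <- o7; auto. }
  assert (B8 : forall s, I s -> dot (BT (sT s)) (N s) = 0).
  { intros s Hs. destruct (HsT s Hs) as [Ju dsT].
    destruct (FT _ Ju) as (_&_&_&_&_&(_&_&_&_&q5&_&_)).
    rewrite <- B1, dot_comm; auto. }
  assert (Wp : forall s, I s -> 0 < sqrt (kappa s ^ 2 + tau s ^ 2)).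
  { intros s Hs. destruct (Fa s Hs) as (_&_&_&_&kp&_). apply sqrt_lt_R0. nra. }
  assert (TT1 : forall s, I s ->
    tauT (sT s) = (Derive tau s * kappa s - tau s * Derive kappa s) / (kappa s * sqrt (kappa s ^ 2 + tau s ^ 2) ^ 2)).
  { intros s Hs. destruct (HsT s Hs) as [Ju dsT].
    destruct (FT _ Ju) as (_&_&_&dBT&_).
    destruct (Fa s Hs) as (_&dT&_&_&kp&_).
    destruct (Hkt s Hs) as [ek et].
    pose proof (Wp s Hs) as wp.
    pose proof (dot_derive _ _ _ _ _ (derv_comp _ _ _ _ _ dBT dsT) dT) as P.
    set (w := sqrt (kappa s ^ 2 + tau s ^ 2)) in *.
    assert (Q : is_derive (fun r => tau r / sqrt (kappa r ^ 2 + tau r ^ 2)) s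
       ((Derive tau s * w^2 - tau s * (kappa s * Derive kappa s + tau s * Derive tau s)) / w^3)).
    { auto_derive.
      - replace (kappa s * (kappa s * 1) + tau s * (tau s * 1)) with (kappa s ^ 2 + tau s ^ 2) by ring.
        fold w. repeat split; auto; try nra; lra.
      - replace (kappa s * (kappa s * 1) + tau s * (tau s * 1)) with (kappa s ^ 2 + tau s ^ 2) by ring.
        fold w. change (Derive (fun x0 => tau x0) s) with (Derive tau s).
        change (Derive (fun x0 => kappa x0) s) with (Derive kappa s).
        field; lra. }
    assert (Q' : is_derive (fun r => dot (BT (sT r)) (T r)) s
       ((Derive tau s * w^2 - tau s * (kappa s * Derive kappa s + tau s * Derive tau s)) / w^3)).
    { eapply is_derive_ext_loc; [|exact Q]. eapply filter_imp; [|exact (open_loc _ _ HI Hs)].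
      intros r Hr. cbv beta. rewrite B7 by auto. pose proof (B6 r Hr) as h6. pose proof (Wp r Hr) as h7.
      set (w' := sqrt (kappa r ^ 2 + tau r ^ 2)) in *. set (d := dot (NT (sT r)) (B r)) in *.
      change (@eq R (tau r / w') d). rewrite <- h6. field. lra. }
    pose proof (deriv_unique_r _ _ _ _ P Q') as E.
    cbv beta in E. rewrite !dot_scall, dot_scalr, B8 in E by auto.
    pose proof (B5 s Hs) as h5. fold w in h5.
    set (d := dot (NT (sT s)) (T s)) in *.
    assert (Hd : d = - kappa s / w) by (rewrite <- h5; field; lra).
    rewrite Hd in E.
    assert (Hw2 : w ^ 2 = kappa s ^ 2 + tau s ^ 2) by (apply pow2_sqrt; nra).
    rewrite Hw2 in E.
    assert (Ht : tauT (sT s) = (kappa s * (- tauT (sT s) * (- kappa s / w)) + kappa s * 0) * w / kappa s ^ 2)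
      by (field; lra).
    rewrite Ht, E. field. lra. }
  split.
  - exists (fun r => atan (x (sT r) / y (sT r))).
    intros s Hs. destruct (HsT s Hs) as [Ju dsT].
    destruct (BF _ Ju) as (hz&dx&dy&hkb&htb).
    destruct (Fb _ Ju) as (_&_&_&_&kbp&_).
    assert (yn : y (sT s) <> 0) by (intro h0; rewrite h0, Rmult_0_r in hkb; lra).
    assert (tn : tauT (sT s) <> 0) by (intro h0; rewrite h0, Rmult_0_l in hkb; lra).
    assert (hxy : x (sT s)^2 + y (sT s)^2 = 1).
    { pose proof (Hxyz _ Ju) as h. replace (z (sT s)^2) with 0 in h by (rewrite hz; ring). lra. }
    split.
    + pose proof (is_derive_div _ _ _ _ _ dx dy yn) as Pq.
      pose proof (is_derive_comp _ _ _ _ _ (is_derive_atan _) Pq) as Pa.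
      pose proof (is_derive_comp _ _ _ _ _ Pa dsT) as Pc.
      eapply is_derive_eq; [exact Pc|].
      rewrite <- B3 by auto.
      change (kappa s * (((kappaT (sT s) * y (sT s) * y (sT s) - x (sT s) * (- kappaT (sT s) * x (sT s))) / y (sT s) ^ 2) * / (1 + (x (sT s) / y (sT s)) * (x (sT s) / y (sT s)))) = kappa s * kappaT (sT s)).
      rewrite xy_lem; auto.
    + rewrite tan_atan, hkb, htb. field. auto.
  - intros s Hs sigma. destruct (HsT s Hs) as [Ju dsT].
    destruct (BF _ Ju) as (hz&dx&dy&hkb&htb).
    destruct (Fb _ Ju) as (_&_&_&_&kbp&_).
    destruct (Fa s Hs) as (_&_&_&_&kp&_).
    destruct (Hkt s Hs) as [ek et].
    assert (yn : y (sT s) <> 0) by (intro h0; rewrite h0, Rmult_0_r in hkb; lra).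
    assert (tn : tauT (sT s) <> 0) by (intro h0; rewrite h0, Rmult_0_l in hkb; lra).
    assert (hxy : x (sT s)^2 + y (sT s)^2 = 1).
    { pose proof (Hxyz _ Ju) as h. replace (z (sT s)^2) with 0 in h by (rewrite hz; ring). lra. }
    exists (kappaT (sT s) / y (sT s) ^ 2). split.
    + apply (is_derive_ext_loc (fun v => x v / y v)).
      * eapply filter_imp; [|exact (open_loc _ _ HJ Ju)]. intros v Hv. cbv beta.
        destruct (BF _ Hv) as (_&_&_&hk&ht). destruct (Fb _ Hv) as (_&_&_&_&kbv&_).
        change (@eq R (x v / y v) (taub v / kappab v)). rewrite hk in kbv |- *. rewrite ht.
        assert (y v <> 0) by (intro h0; rewrite h0, Rmult_0_r in kbv; lra).
        assert (tauT v <> 0) by (intro h0; rewrite h0, Rmult_0_l in kbv; lra).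
        field; auto.
      * eapply is_derive_eq; [exact (is_derive_div _ _ _ _ _ dx dy yn)|].
        replace (kappaT (sT s) * y (sT s) * y (sT s) - x (sT s) * (- kappaT (sT s) * x (sT s)))
          with (kappaT (sT s) * (x (sT s)^2 + y (sT s)^2)) by ring.
        rewrite hxy. match goal with |- ?a = ?b => change (@eq R a b) end. field; auto.
    + unfold sigma. rewrite hkb, htb.
      replace ((tauT (sT s) * y (sT s))^2 + (tauT (sT s) * x (sT s))^2)
        with (tauT (sT s) ^2 * (x (sT s)^2 + y (sT s)^2)) by ring.
      rewrite hxy, Rmult_1_r. unfold pow32.
      pose proof (is_derive_div _ _ _ _ _ (Derive_correct _ _ et) (Derive_correct _ _ ek) ltac:(lra)) as QD.
      rewrite (is_derive_unique _ _ _ QD).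
      pose proof (TT1 s Hs) as ht1. pose proof (B3 s Hs) as hb3. pose proof (Wp s Hs) as wp.
      set (w := sqrt (kappa s ^ 2 + tau s ^ 2)) in *.
      set (t := tauT (sT s)) in *.
      assert (hk : kappaT (sT s) = w / kappa s) by (rewrite <- hb3; field; lra).
      rewrite hk.
      assert (Ddn : Derive tau s * kappa s - tau s * Derive kappa s <> 0).
      { intro h0. apply tn. rewrite ht1, h0. field. split; lra. }
      destruct (Rlt_or_le 0 t) as [tp|tnp].
      * left. rewrite sqrt_pow2 by lra. rewrite ht1. field. repeat split; auto; lra.
      * right. replace (t^2) with ((-t)^2) by ring. rewrite sqrt_pow2 by lra.
        rewrite ht1. field. repeat split; auto; lra.
Qed.
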